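(* Let $R$ be a $\sigma$-(sps) Armendariz ring, where $\sigma$ is an endomorphism of $R$. Then: (1) $R$ is reversible if and only if $R[[x;\sigma]]$ is reversible; (2) $R$ is symmetric if and only if $R[[x;\sigma]]$ is symmetric.
   Context: All rings are associative with identity; $\sigma$ denotes a nonzero, non-identity ring endomorphism of $R$. The skew power series ring $R[[x;\sigma]]$ consists of all formal series $\sum_{i=0}^\infty a_i x^i$ with $a_i\in R$, added termwise and multiplied using distributivity and the rule $xa=\sigma(a)x$ for $a\in R$. A ring $R$ is $\sigma$-(sps) Armendariz if whenever $p=\sum_{i=0}^\infty a_ix^i$ and $q=\sum_{j=0}^\infty b_jx^j$ in $R[[x;\sigma]]$ satisfy $pq=0$, then $a_ib_j=0$ for all $i,j$. A ring $S$ is reversible if $ab=0$ implies $ba=0$ for all $a,b\in S$; $S$ is symmetric if $abc=0$ implies $acb=0$ for all $a,b,c\in S$. *)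

(* Defs.v *)
From HB Require Import structures.
From mathcomp Require Import all_boot all_order all_algebra.
Set Implicit Arguments. Unset Strict Implicit. Unset Printing Implicit Defensive.
Import GRing.Theory.
Local Open Scope ring_scope.

(* Skew power series ring R[[x;sigma]]: a series
   sum_i a_i x^i is represented by its coefficient function nat -> R.
   Multiplication follows x a = sigma(a) x, i.e.
   (a x^i)(b x^j) = a sigma^i(b) x^(i+j), hence
   (p q)_n = sum_{i+j=n} p_i sigma^i(q_j). *)

Definition sps (R : nzRingType) := nat -> R.

Definition sps_mul (R : nzRingType) (sigma : {rmorphism R -> R})
  (p q : sps R) : sps R :=
  fun n => \sum_(i < n.+1) p i * iter i sigma (q (n - i)%N).

Definition sps_is_zero (R : nzRingType) (p : sps R) : Prop :=
  forall n, p n = 0.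

Definition sps_armendariz (R : nzRingType) (sigma : {rmorphism R -> R}) : Prop :=
  forall p q : sps R, sps_is_zero (sps_mul sigma p q) ->
    forall i j : nat, p i * q j = 0.

Definition reversible (R : nzRingType) : Prop :=
  forall a b : R, a * b = 0 -> b * a = 0.

Definition symmetric_ring (R : nzRingType) : Prop :=
  forall a b c : R, a * b * c = 0 -> a * c * b = 0.

Definition sps_reversible (R : nzRingType) (sigma : {rmorphism R -> R}) : Prop :=
  forall p q : sps R, sps_is_zero (sps_mul sigma p q) ->
    sps_is_zero (sps_mul sigma q p).

Definition sps_symmetric (R : nzRingType) (sigma : {rmorphism R -> R}) : Prop :=
  forall p q r : sps R,
    sps_is_zero (sps_mul sigma (sps_mul sigma p q) r) ->
    sps_is_zero (sps_mul sigma (sps_mul sigma p r) q).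

(* Main.v *)
Require Import Defs.
From HB Require Import structures.
From mathcomp Require Import all_boot all_order all_algebra.
From Stdlib Require Import FunctionalExtensionality.
Local Open Scope ring_scope.
Import GRing.Theory.

Section Aux.
Variable R : nzRingType.
Variable sigma : {rmorphism R -> R}.

Definition cst (a : R) : sps R := fun n => if n is 0%N then a else 0.

Lemma cst_mul a b : sps_mul sigma (cst a) (cst b) = cst (a * b).
Proof.
apply: functional_extensionality => n.
rewrite /sps_mul; case: n => [|n].
  by rewrite big_ord_recl big_ord0 addr0 subn0.
rewrite big_ord_recl big1 /=.
  by rewrite mulr0 addr0.
by move=> i _; rewrite mul0r.
Qed.

Lemma L (HA : sps_armendariz sigma) a b :
  a * b = 0 -> forall n, a * iter n sigma b = 0.
Proof.
move=> ab n.
pose P : sps R := fun i => if i is 0%N then a else if i is 1%N then - a else 0.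
pose Q : sps R := fun n => iter n sigma b.
have Z : sps_is_zero (sps_mul sigma P Q).
  move=> m; rewrite /sps_mul; case: m => [|m].
    by rewrite big_ord_recl big_ord0 addr0.
  rewrite big_ord_recl big_ord_recl big1 ?addr0.
    rewrite /= /Q /=.
    by rewrite mulNr /bump /= subn1 /= addrN.
  by move=> i _; rewrite /= mul0r.
by have := HA P Q Z 0%N n.
Qed.

Lemma iter_mul n (b c : R) :
  iter n sigma (b * c) = iter n sigma b * iter n sigma c.
Proof. by elim: n => [|n IH] //=; rewrite IH rmorphM. Qed.

Lemma T (HA : sps_armendariz sigma) a b c i m :
  a * b * c = 0 -> (i <= m)%N ->
  a * iter i sigma b * iter m sigma c = 0.
Proof.
move=> h im.
have h1 : a * iter i sigma (b * c) = 0 by apply: L => //; rewrite mulrA.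
rewrite iter_mul mulrA in h1.
have := @L HA _ _ h1 (m - i)%N.
by rewrite -iterD subnK.
Qed.

Lemma cmul c (p q : sps R) n :
  sps_mul sigma (fun i => c * p i) q n = c * sps_mul sigma p q n.
Proof.
by rewrite /sps_mul mulr_sumr; apply: eq_bigr => i _; rewrite mulrA.
Qed.

End Aux.
Arguments cst {R}.
Arguments cst_mul {R sigma}.
Arguments L {R sigma}.
Arguments T {R sigma}.
Arguments cmul {R sigma}.

Theorem proposition2p5 (R : nzRingType) (sigma : {rmorphism R -> R})
  (Hnz : exists a : R, sigma a != 0) (Hnid : exists a : R, sigma a != a)
  (HA : sps_armendariz sigma) :
  (reversible R <-> sps_reversible sigma) /\
  (symmetric_ring R <-> sps_symmetric sigma).
Proof.
have symrev : symmetric_ring R -> reversible R.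
  by move=> S a b ab; have := S 1 a b; rewrite !mul1r; apply.
split; split.
- move=> Hrev p q Z n; rewrite /sps_mul big1 // => i _.
  apply: L => //; apply: Hrev; exact: HA Z _ _.
- move=> H a b ab.
  have Z : sps_is_zero (sps_mul sigma (cst a) (cst b)).
    by rewrite cst_mul ab => -[|n].
  by have := H _ _ Z 0%N; rewrite cst_mul.
- move=> Hsym p q r Z.
  have Hrev := symrev Hsym.
  have h1 : forall i j l, p i * r l * q j = 0.
    move=> i j l; apply: Hsym.
    have Z2 : sps_is_zero (sps_mul sigma (fun i => r l * p i) q).
      move=> k; rewrite cmul; apply: Hrev; exact: HA Z _ _.
    have := HA _ _ Z2 i j; rewrite -mulrA => h; exact: Hrev.
  move=> n; rewrite /sps_mul big1 // => k _.
  rewrite mulr_suml big1 // => i _.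
  apply: T => //; last by rewrite -ltnS ltn_ord.
- move=> H a b c abc.
  have Z : sps_is_zero (sps_mul sigma (sps_mul sigma (cst a) (cst b)) (cst c)).
    by rewrite !cst_mul abc => -[|n].
  by have := H _ _ _ Z 0%N; rewrite !cst_mul.
Qed.
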